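(* Let $r\ge 2$, $n=2r$, $k=r$, $I=\{1,3,\dots,2r-1\}$, $J=\{2,4,\dots,2r\}$, and let $b_1,\dots,b_{2r}\in\mathbb{C}[[t]]$ with $\sum_{i=1}^{2r}b_i=0$. Let $X'$ be a subset of $\{0,2,4,\dots,2r-2\}$ with $1\le|X'|<r$, and let $X,Y$ be the $r$-subsets of $\{1,\dots,2r\}$ associated with $X'$ as in the context. Suppose that for every $j=0,1,\dots,r-1$ (with the even number $2r$ identified with $0$): $t\mid b_{2j+1}+b_{2j+2}$ if $2j$ and $2j+2$ are either both in $X'$ or both not in $X'$, and $t\nmid b_{2j+1}+b_{2j+2}$ if exactly one of $2j,2j+2$ lies in $X'$. Suppose further that $t\mid b_{p}+b_{p+1}+b_{q}+b_{q+1}$ whenever $p,q$ are two consecutive (in cyclic order) elements of the set of odd indices $i\in\{1,3,\dots,2r-1\}$ with $t\nmid b_i+b_{i+1}$. Then the module $\mathbb{M}(I,J)$ is isomorphic to $L_X\oplus L_Y$.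
   Context: $\Gamma_n$ is the quiver with vertices $1,\dots,n$ on a cycle (vertex $0$ identified with $n$), arrows $x_i\colon i-1\to i$, $y_i\colon i\to i-1$. $B_{k,n}$ is its completed path algebra modulo the closure of the ideal generated by $xy=yx$ and $x^k=y^{n-k}$ at every vertex; its centre is $\mathbb{C}[[t]]$, $t=\sum_ix_iy_i$. For a $k$-subset $S$ of $\{1,\dots,n\}$, the rank $1$ module $L_S$ has $\mathbb{C}[[t]]$ at every vertex, $x_i$ acting as multiplication by $1$ and $y_i$ by $t$ if $i\in S$, and $x_i$ by $t$ and $y_i$ by $1$ if $i\notin S$. Here $\mathbb{M}(I,J)$ is the module with $V_i=\mathbb{C}[[t]]^2$ at every vertex, $x_i=\begin{pmatrix}t&b_i\\0&1\end{pmatrix}$, $y_i=\begin{pmatrix}1&-b_i\\0&t\end{pmatrix}$ for odd $i$, and $x_i=\begin{pmatrix}1&b_i\\0&t\end{pmatrix}$, $y_i=\begin{pmatrix}t&-b_i\\0&1\end{pmatrix}$ for even $i$. The elements of $\{0,2,\dots,2r-2\}$ are the peaks of the rim $I$. Given $X'$, define $X\subset\{1,\dots,2r\}$ as follows: for each $j=0,\dots,r-1$ (with $2r\equiv 0$ for membership in $X'$): if $2j\in X'$ and $2j+2\in X'$, then $2j+1\in X$, $2j+2\notin X$; if $2j\notin X'$ and $2j+2\in X'$, then $2j+1,2j+2\notin X$; if $2j\in X'$ and $2j+2\notin X'$, then $2j+1,2j+2\in X$; if $2j\notin X'$ and $2j+2\notin X'$, then $2j+1\notin X$, $2j+2\in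 X$. Set $Y=\{1,\dots,2r\}\setminus X$ (equivalently, $Y$ is obtained by the same rule from the complement $Y'$ of $X'$ in the set of peaks). *)

(* Defs.v *)
From HB Require Import structures.
From mathcomp Require Import all_boot all_order all_algebra.
From mathcomp Require Import boolp reals.
From mathcomp Require Import complex.
Set Implicit Arguments. Unset Strict Implicit. Unset Printing Implicit Defensive.
Import Order.TTheory GRing.Theory Num.Theory.
Local Open Scope ring_scope.

Record fps (K : Type) := FPS { coef : nat -> K }.
Arguments FPS {K}.

Section FPS.
Variable K : comNzRingType.
Local Notation F := (fps K).

HB.instance Definition _ := gen_eqMixin F.
HB.instance Definition _ := gen_choiceMixin F.

Lemma fpsP (f g : F) : coef f =1 coef g -> f = g.
Proof. by case: f; case: g => g f /= e; congr FPS; apply/funext. Qed.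

Definition fps0 : F := FPS (fun=> 0).
Definition fpsN (f : F) : F := FPS (fun n => - coef f n).
Definition fpsD (f g : F) : F := FPS (fun n => coef f n + coef g n).

Fact fpsDA : associative fpsD.
Proof. by move=> f g h; apply: fpsP => n /=; rewrite addrA. Qed.
Fact fpsDC : commutative fpsD.
Proof. by move=> f g; apply: fpsP => n /=; rewrite addrC. Qed.
Fact fps0D : left_id fps0 fpsD.
Proof. by move=> f; apply: fpsP => n /=; rewrite add0r. Qed.
Fact fpsND : left_inverse fps0 fpsN fpsD.
Proof. by move=> f; apply: fpsP => n /=; rewrite addNr. Qed.

HB.instance Definition _ := GRing.isZmodule.Build F fpsDA fpsDC fps0D fpsND.

Definition fps1 : F := FPS (fun n => (n == 0)%:R).
Definition fpsM (f g : F) : F :=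
  FPS (fun n => \sum_(i < n.+1) coef f i * coef g (n - i)).

Lemma coef_fpsM (f g : F) n :
  coef (fpsM f g) n = \sum_(i < n.+1) coef f i * coef g (n - i).
Proof. by []. Qed.

Lemma coef_fpsM_rev (f g : F) n :
  coef (fpsM f g) n = \sum_(i < n.+1) coef f (n - i) * coef g i.
Proof.
rewrite /= (reindex_inj rev_ord_inj); apply: eq_bigr => i _.
have -> : (rev_ord i : nat) = (n - i)%N by rewrite /= subSS.
by rewrite subKn // -ltnS.
Qed.

Fact fpsMA : associative fpsM.
Proof.
move=> p q r; apply: fpsP => i; rewrite coef_fpsM [RHS]coef_fpsM_rev.
pose coef3 j k := coef p j * (coef q (i - j - k)%N * coef r k).
transitivity (\sum_(j < i.+1) \sum_(k < i.+1 | (k <= i - j)%N) coef3 j k).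
  apply: eq_bigr => j _; rewrite coef_fpsM_rev big_distrr /=.
  by rewrite (big_ord_narrow_leq (leq_subr _ _)).
rewrite (exchange_big_dep predT) //=; apply: eq_bigr => k _.
transitivity (\sum_(j < i.+1 | (j <= i - k)%N) coef3 j k).
  apply: eq_bigl => j; rewrite -ltnS -(ltnS j) -!subSn ?leq_ord //.
  by rewrite -subn_gt0 -(subn_gt0 j) -!subnDA addnC.
rewrite (big_ord_narrow_leq (leq_subr _ _)) big_distrl /=. idtac.
by apply: eq_bigr => j _; rewrite /coef3 -!subnDA [(j + k)%N]addnC mulrA.
Qed.

Fact fpsMC : commutative fpsM.
Proof.
move=> f g; apply: fpsP => n; rewrite coef_fpsM_rev /=.
by apply: eq_bigr => i _; rewrite mulrC.
Qed.

Fact fps1M : left_id fps1 fpsM.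
Proof.
move=> f; apply: fpsP => n /=; rewrite big_ord_recl /= mul1r subn0.
by rewrite big1 ?addr0 // => i _; rewrite mul0r.
Qed.

Fact fpsMDl : left_distributive fpsM fpsD.
Proof.
move=> f g h; apply: fpsP => n /=; rewrite -big_split /=.
by apply: eq_bigr => i _; rewrite mulrDl.
Qed.

Fact fps1_neq0 : fps1 != fps0.
Proof.
apply/eqP => /(congr1 (fun f => coef f 0)) /= /eqP.
by rewrite oner_eq0.
Qed.

HB.instance Definition _ :=
  GRing.Zmodule_isComNzRing.Build F fpsMA fpsMC fps1M fpsMDl fps1_neq0.

Definition fpsX : F := FPS (fun n => (n == 1)%:R).

End FPS.

Definition tdvd (K : comNzRingType) (f : fps K) : Prop :=
  exists g : fps K, f = fpsX K * g.

(* Representations of the quiver Gamma_n by free A-modules of rank m.  *)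
(* Vertices 1..n (vertex 0 identified with n); arrow x_i : i-1 -> i,   *)
(* y_i : i -> i-1, for i = 1..n.  A module is given by the matrices of *)
(* x_i and y_i, acting on column vectors (v |-> x_i *m v).             *)
Definition prevv (n i : nat) : nat := if i == 1%N then n else i.-1.

Definition rep_iso (A : comNzRingType) (m n : nat)
  (x y x' y' : nat -> 'M[A]_m) : Prop :=
  exists g h : nat -> 'M[A]_m,
    (forall j, (1 <= j <= n)%N -> g j *m h j = 1%:M /\ h j *m g j = 1%:M) /\
    (forall i, (1 <= i <= n)%N ->
        g i *m x i = x' i *m g (prevv n i) /\
        g (prevv n i) *m y i = y' i *m g i).

Arguments rep_iso {A} m n x y x' y'.

Definition mx2 (A : Type) (a b c d : A) : 'M[A]_2 :=
  \matrix_(i < 2, j < 2)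
    if (i : nat) == 0%N then (if (j : nat) == 0%N then a else b)
    else (if (j : nat) == 0%N then c else d).

Section Modules.
Variable A : comNzRingType.
Variable t : A.

(* M(I,J) with I odd, J even, given b_1..b_n *)
Definition MIJ_x (b : nat -> A) (i : nat) : 'M[A]_2 :=
  if odd i then mx2 t (b i) 0 1 else mx2 1 (b i) 0 t.
Definition MIJ_y (b : nat -> A) (i : nat) : 'M[A]_2 :=
  if odd i then mx2 1 (- b i) 0 t else mx2 t (- b i) 0 1.

Definition LS_x (S : pred nat) (i : nat) : A := if S i then 1 else t.
Definition LS_y (S : pred nat) (i : nat) : A := if S i then t else 1.
Definition LXY_x (X Y : pred nat) (i : nat) : 'M[A]_2 :=
  mx2 (LS_x X i) 0 0 (LS_x Y i).
Definition LXY_y (X Y : pred nat) (i : nat) : 'M[A]_2 :=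
  mx2 (LS_y X i) 0 0 (LS_y Y i).
End Modules.

Definition inXp (r : nat) (Xp : {set 'I_(2 * r)}) (m : nat) : bool :=
  [exists p in Xp, (p : nat) == (m %% (2 * r))%N].

Definition Xset (r : nat) (Xp : {set 'I_(2 * r)}) (m : nat) : bool :=
  let j := (m.-1)./2 in
  let a := inXp Xp (2 * j) in
  let c := inXp Xp (2 * j + 2) in
  [&& (1 <= m)%N, (m <= 2 * r)%N &
   if odd m then (* m = 2j+1 *)
     match a, c with
     | true, true => true | false, true => false
     | true, false => true | false, false => false end
   else (* m = 2j+2 *)
     match a, c with
     | true, true => false | false, true => false
     | true, false => true | false, false => true end].

Definition Yset (r : nat) (Xp : {set 'I_(2 * r)}) (m : nat) : bool :=
  [&& (1 <= m)%N, (m <= 2 * r)%N & ~~ Xset Xp m].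

Definition cyc_consecutive (O : nat -> Prop) (p q : nat) : Prop :=
  [/\ O p, O q, p <> q &
      forall s, O s -> ~ (if (p < q)%N then (p < s < q)%N
                          else (p < s)%N || (s < q)%N)].

(* Main.v *)
Require Import Defs.
From HB Require Import structures.
From mathcomp Require Import all_boot all_order all_algebra.
From mathcomp Require Import boolp reals complex.
Import Order.TTheory GRing.Theory Num.Theory.
Local Open Scope ring_scope.
From mathcomp Require Import ring zify.
Set Implicit Arguments. Unset Strict Implicit.
Section FPSL.
Variable K : comNzRingType.
Local Notation F := (fps K).
Local Notation t := (fpsX K).

Lemma coefD (f g : F) n : coef (f + g) n = coef f n + coef g n.
Proof. by []. Qed.
Lemma coefN (f : F) n : coef (- f) n = - coef f n.
Proof. by []. Qed.
Lemma coefB (f g : F) n : coef (f - g) n = coef f n - coef g n.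
Proof. by []. Qed.
Lemma coef0 n : coef (0 : F) n = 0.
Proof. by []. Qed.
Lemma coefM (f g : F) n : coef (f * g) n = \sum_(i < n.+1) coef f i * coef g (n - i).
Proof. by []. Qed.
Lemma coef_sum I (s : seq I) (P : pred I) (G : I -> F) n :
  coef (\sum_(i <- s | P i) G i) n = \sum_(i <- s | P i) coef (G i) n.
Proof. by apply: (big_morph (fun f : F => coef f n) (fun f g => coefD f g n) (coef0 n)). Qed.

Lemma coefXM (g : F) n : coef (t * g) n = if n is m.+1 then coef g m else 0.
Proof.
rewrite coefM; case: n => [|n].
  by rewrite big_ord1 /= mul0r.
rewrite big_ord_recl /= mul0r add0r big_ord_recl /= mul1r subn1 /=.
by rewrite big1 ?addr0 // => i _; rewrite /= mul0r.
Qed.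

Definition fdiv (f : F) : F := FPS (fun n => coef f n.+1).
Lemma fdivK (f : F) : coef f 0 = 0 -> t * fdiv f = f.
Proof. by move=> h; apply: fpsP => -[|n]; rewrite coefXM. Qed.

Lemma tdvdP (f : F) : tdvd f <-> coef f 0 = 0.
Proof.
split; first by case=> g ->; rewrite coefXM.
by move=> h; exists (fdiv f); rewrite fdivK.
Qed.

Definition cst (a : K) : F := FPS (fun n => if n == 0%N then a else 0).
Lemma cstB a b : cst (a - b) = cst a - cst b.
Proof. by apply: fpsP => -[|n]; rewrite coefB /= ?subr0. Qed.
Lemma coef_cstM a (f : F) n : coef (cst a * f) n = a * coef f n.
Proof.
rewrite coefM big_ord_recl /= subn0 big1 ?addr0 // => i _.
by rewrite /= mul0r.
Qed.
Lemma cstM a b : cst a * cst b = cst (a * b).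
Proof. by apply: fpsP => n; rewrite coef_cstM /=; case: (n == 0%N); rewrite ?mulr0. Qed.
Lemma cst1 : cst 1 = 1.
Proof. by apply: fpsP => -[|n]. Qed.
End FPSL.

Section MX.
Variable A : comNzRingType.
Lemma mul_mx2 (a b c d a' b' c' d' : A) :
  mx2 a b c d *m mx2 a' b' c' d' =
  mx2 (a * a' + b * c') (a * b' + b * d') (c * a' + d * c') (c * b' + d * d').
Proof.
apply/matrixP => i j; rewrite !mxE big_ord_recl big_ord1 !mxE.
by case: i j => [[|[|?]] ?] [[|[|?]] ?].
Qed.
Lemma mx2_1 : (1%:M : 'M[A]_2) = mx2 1 0 0 1.
Proof.
apply/matrixP => i j; rewrite !mxE.
by case: i j => [[|[|?]] ?] [[|[|?]] ?].
Qed.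
Definition o0 : 'I_2 := @Ordinal 2 0 isT.
Definition o1 : 'I_2 := @Ordinal 2 1 isT.
Definition inv2 (k : A) (M : 'M[A]_2) : 'M[A]_2 :=
  mx2 (k * M o1 o1) (- (k * M o0 o1)) (- (k * M o1 o0)) (k * M o0 o0).
Lemma inv2P k (a b c d : A) : k * (a * d - b * c) = 1 ->
  mx2 a b c d *m inv2 k (mx2 a b c d) = 1%:M /\
  inv2 k (mx2 a b c d) *m mx2 a b c d = 1%:M.
Proof.
move=> h; rewrite /inv2 !mxE /= mx2_1 !mul_mx2.
split; congr mx2; (try rewrite -h); ring.
Qed.
End MX.
Section Steps.
Variable A : comNzRingType.
Variables (t B B' P b D : A).

Lemma odd_in : t * D = B' - P ->
  mx2 1 (B-P-b) 1 (B'-P-b) *m mx2 t b 0 1 = mx2 1 0 0 t *m mx2 t (B-P) 1 D /\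
  mx2 t (B-P) 1 D *m mx2 1 (-b) 0 t = mx2 t 0 0 1 *m mx2 1 (B-P-b) 1 (B'-P-b).
Proof.
move=> h; have -> : B' = t * D + P by rewrite h; ring.
by rewrite !mul_mx2; split; congr mx2; ring.
Qed.

Lemma odd_out : t * D = B - P ->
  mx2 1 (B-P-b) 1 (B'-P-b) *m mx2 t b 0 1 = mx2 t 0 0 1 *m mx2 1 D t (B'-P) /\
  mx2 1 D t (B'-P) *m mx2 1 (-b) 0 t = mx2 1 0 0 t *m mx2 1 (B-P-b) 1 (B'-P-b).
Proof.
move=> h; have -> : B = t * D + P by rewrite h; ring.
by rewrite !mul_mx2; split; congr mx2; ring.
Qed.

Lemma even_in : t * D = B' - P ->
  mx2 t (B-P) 1 D *m mx2 1 b 0 t = mx2 t 0 0 1 *m mx2 1 (B-P+b) 1 (B'-P+b) /\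
  mx2 1 (B-P+b) 1 (B'-P+b) *m mx2 t (-b) 0 1 = mx2 1 0 0 t *m mx2 t (B-P) 1 D.
Proof.
move=> h; have -> : B' = t * D + P by rewrite h; ring.
by rewrite !mul_mx2; split; congr mx2; ring.
Qed.

Lemma even_out : t * D = B - P ->
  mx2 1 D t (B'-P) *m mx2 1 b 0 t = mx2 1 0 0 t *m mx2 1 (B-P+b) 1 (B'-P+b) /\
  mx2 1 (B-P+b) 1 (B'-P+b) *m mx2 t (-b) 0 1 = mx2 t 0 0 1 *m mx2 1 D t (B'-P).
Proof.
move=> h; have -> : B = t * D + P by rewrite h; ring.
by rewrite !mul_mx2; split; congr mx2; ring.
Qed.
End Steps.
Section Comb.
Variable K : comNzRingType.
Variables (r : nat) (inx : nat -> bool) (c u : nat -> K).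
Hypothesis H1 : forall j, (j < r)%N -> (inx j == inx j.+1) = (c j == 0).
Hypothesis H2 : forall j1 j2, (j1 < j2 < r)%N -> inx j1 != inx j1.+1 ->
  inx j2 != inx j2.+1 -> (forall k, (j1 < k < j2)%N -> inx k = inx k.+1) ->
  c j1 + c j2 = 0.
Hypothesis Hex : exists j, (j < r)%N && (inx j != inx j.+1).
Hypothesis Hu : forall j, (j < r)%N -> u j.+1 = u j + c j.
Lemma const_run a b : (a <= b)%N -> (forall k, (a <= k < b)%N -> inx k = inx k.+1) ->
  inx a = inx b.
Proof.
elim: b => [|b IH]; first by rewrite leqn0 => /eqP ->.
rewrite leq_eqVlt => /orP [/eqP -> //|]; rewrite ltnS => hab hk.
rewrite (IH hab) ?(hk b) ?hab ?ltnSn //.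
by move=> k /andP [h1 h2]; apply: hk; rewrite h1 /=; lia.
Qed.
Lemma comb_main : exists2 d : K, d != 0 &
  forall j, (j <= r)%N -> u j = u 0%N + (if inx j == inx 0%N then 0 else d).
Proof.
pose tr j := (j < r)%N && (inx j != inx j.+1).
have [j1 Hj1 Hmin] : exists2 j1, tr j1 & forall j, tr j -> (j1 <= j)%N.
  by case: (ex_minnP Hex) => j1 h1 h2; exists j1.
move: (Hj1) => /andP [j1r j1t].
have in_j1 : inx 0%N = inx j1.
  apply: const_run => // k /andP [_ hk].
  apply/eqP; apply: contraTT (hk) => hn; rewrite -leqNgt; apply: Hmin.
  by rewrite /tr hn andbT; exact: ltn_trans hk j1r.
have sign : forall j, tr j -> c j = (if inx j == inx 0%N then c j1 else - c j1).
  elim/ltn_ind => j IH trj.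
  have [jj1|jgt] := leqP j j1.
    have ej : j = j1 by apply/eqP; rewrite eqn_leq jj1 Hmin.
    by rewrite ej -in_j1 eqxx.
  have exk : exists k, (k < j)%N && tr k by exists j1; rewrite jgt Hj1.
  have ubk : forall k, (k < j)%N && tr k -> (k <= j)%N.
    by move=> k /andP [h _]; exact: ltnW.
  case: (ex_maxnP exk ubk) => k /andP [kj trk] kmax.
  move: (trj) (trk) => /andP [jr jt] /andP [kr kt].
  have between : forall m, (k < m < j)%N -> inx m = inx m.+1.
    move=> m /andP [km mj]; apply/eqP; apply: contraTT km => hn.
    rewrite -leqNgt; apply: kmax; rewrite mj /tr hn andbT; exact: ltn_trans mj jr.
  have e1 : c k + c j = 0 by apply: H2 => //; rewrite kj jr.
  have e2 : inx k.+1 = inx j.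
    by apply: const_run => // m /andP [h1 h2]; apply: between; rewrite h2 andbT.
  have cj : c j = - c k by rewrite -{1}(addKr (c k) (c j)) e1 addr0.
  rewrite cj (IH k kj trk).
  move: kt; rewrite e2; case: (inx k); case: (inx j); case: (inx 0%N) => //= _;
    by rewrite ?opprK.
exists (c j1); first by rewrite -(@H1 j1 j1r).
elim=> [|j IH] hj; first by rewrite eqxx addr0.
rewrite Hu // IH ?(ltnW hj) //.
case trj: (inx j == inx j.+1).
  have -> : c j = 0 by apply/eqP; rewrite -H1.
  by rewrite (eqP trj) addr0.
have := sign j; rewrite /tr hj trj => /(_ isT) ->.
move: trj; case: (inx j); case: (inx j.+1); case: (inx 0%N) => //= _; ring.
Qed.
End Comb.
Section Main.
Variable R : realType.
Variable r : nat.
Variable b : nat -> fps (complex R).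
Variable Xp : {set 'I_(2 * r)}.
Local Notation K := (complex R).
Local Notation t := (fpsX (complex R)).
Hypothesis hr : (2 <= r)%N.
Hypothesis hsum : \sum_(1 <= i < (2 * r).+1) b i = 0.
Hypothesis hev : forall p : 'I_(2 * r), p \in Xp -> ~~ odd p.
Hypothesis hcard : (1 <= #|Xp| < r)%N.
Hypothesis hpair : forall j : nat, (j < r)%N ->
     (inXp Xp (2 * j) = inXp Xp (2 * j + 2) ->
        tdvd (b (2 * j + 1)%N + b (2 * j + 2)%N)) /\
     (inXp Xp (2 * j) <> inXp Xp (2 * j + 2) ->
        ~ tdvd (b (2 * j + 1)%N + b (2 * j + 2)%N)).
Hypothesis hcons : forall p q : nat,
     cyc_consecutive
       (fun i => [/\ odd i, (1 <= i <= 2 * r - 1)%N & ~ tdvd (b i + b i.+1)])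
       p q ->
     tdvd (b p + b p.+1 + b q + b q.+1).

Definition inx j := inXp Xp (2 * j).
Definition PP j := \sum_(1 <= k < (2 * j).+1) b k.
Definition cc j := coef (b (2 * j + 1)%N + b (2 * j + 2)%N) 0.
Definition uu j := coef (PP j) 0.

Lemma inxS j : inXp Xp (2 * j + 2) = inx j.+1.
Proof. by rewrite /inx mulnSr. Qed.

Lemma inx_r : inx r = inx 0.
Proof. by rewrite /inx /inXp muln0 modnn mod0n. Qed.

Lemma PP0 : PP 0 = 0.
Proof. by rewrite /PP big_geq. Qed.

Lemma PPr : PP r = 0.
Proof. exact: hsum. Qed.

Lemma PPS j : PP j.+1 = PP j + b (2 * j + 1)%N + b (2 * j + 2)%N.
Proof.
rewrite /PP (_ : (2 * j.+1).+1 = (2 * j + 1).+2)%N; last lia.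
rewrite big_nat_recr // big_nat_recr //; last lia.
by rewrite addn1 (_ : (2 * j).+2 = 2 * j + 2)%N //; lia.
Qed.

Lemma uuS j : uu j.+1 = uu j + cc j.
Proof. by rewrite /uu /cc PPS !coefD addrA. Qed.

Lemma H1 j : (j < r)%N -> (inx j == inx j.+1) = (cc j == 0).
Proof.
move=> jr; have [h1 h2] := hpair jr; rewrite /cc -inxS.
case: eqP => e.
  by have /tdvdP -> := h1 e; rewrite eqxx.
by apply/esym/eqP => /tdvdP; apply: h2.
Qed.

Lemma H2 j1 j2 : (j1 < j2 < r)%N -> inx j1 != inx j1.+1 ->
  inx j2 != inx j2.+1 -> (forall k, (j1 < k < j2)%N -> inx k = inx k.+1) ->
  cc j1 + cc j2 = 0.
Proof.
move=> /andP [j12 j2r] t1 t2 hb.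
have j1r : (j1 < r)%N by exact: ltn_trans j12 j2r.
have e21 : forall j, ((2 * j + 1).+1 = 2 * j + 2)%N by move=> j; lia.
have ntd : forall j, (j < r)%N -> inx j != inx j.+1 ->
    ~ tdvd (b (2 * j + 1)%N + b (2 * j + 1).+1).
  move=> j jr hj; rewrite e21 => /tdvdP /eqP.
  by rewrite -/(cc j) -(H1 jr) (negbTE hj).
have /tdvdP : tdvd (b (2 * j1 + 1)%N + b (2 * j1 + 1).+1 + b (2 * j2 + 1)%N + b (2 * j2 + 1).+1).
  apply: hcons; split.
  - split; first by rewrite oddD oddM.
      by apply/andP; split; lia.
    exact: ntd.
  - split; first by rewrite oddD oddM.
      by apply/andP; split; lia.
    exact: ntd.
  - lia.
  move=> s [so sb snt]; rewrite (_ : (2 * j1 + 1 < 2 * j2 + 1)%N = true); last lia.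
  move=> /andP [ps sq].
  have es : s = (2 * s./2 + 1)%N.
    by have := odd_double_half s; rewrite so -mul2n; lia.
  apply: snt; rewrite es e21; apply/tdvdP; apply/eqP.
  rewrite -/(cc s./2) -H1; last lia.
  by apply/eqP; apply: hb; apply/andP; split; lia.
rewrite !e21 /cc !coefD => h; rewrite -[RHS]h; ring.
Qed.

Lemma Hex : exists j, (j < r)%N && (inx j != inx j.+1).
Proof.
have [//|Hn] := pselect (exists j, (j < r)%N && (inx j != inx j.+1)).
have Hall : forall j, (j <= r)%N -> inx j = inx 0.
  move=> j jr; symmetry; apply: const_run => // k /andP [_ kj].
  apply: contrapT => hne; apply: Hn; exists k.
  by apply/andP; split; [lia | apply/eqP].
have lt2 : forall k : 'I_r, (2 * k < 2 * r)%N by move=> k; rewrite ltn_pmul2l.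
case/andP: hcard => c1 c2.
case i0: (inx 0).
  pose f (k : 'I_r) : 'I_(2 * r) := Ordinal (lt2 k).
  have finj : injective f.
    by move=> k1 k2 /(congr1 val) /= /eqP; rewrite eqn_pmul2l // => /eqP /val_inj.
  have sub : f @: setT \subset Xp.
    apply/subsetP => p /imsetP [k _ ->].
    have := Hall k (ltnW (ltn_ord k)); rewrite i0 /inx /inXp => /existsP [q /andP [qX /eqP qe]].
    have -> : f k = q by apply: val_inj; rewrite /= qe modn_small.
    exact: qX.
  have := subset_leq_card sub; rewrite card_imset // cardsT card_ord.
  by rewrite leqNgt c2.
have [p pX] : exists p, p \in Xp.
  by apply/set0Pn; rewrite -card_gt0.
have pe := hev pX.
have ep : (p = 2 * p./2 :> nat)%N.
  by have := odd_double_half p; rewrite (negbTE pe) -mul2n.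
have hp2 : (p./2 <= r)%N by have := ltn_ord p; lia.
have := Hall _ hp2; rewrite i0 => /negbT.
rewrite /inx /inXp negb_exists => hn; have := (forallP hn) p.
by rewrite pX -ep modn_small ?eqxx // ltn_ord.
Qed.
Lemma half1 j : ((2 * j + 1)./2 = j)%N.
Proof. by rewrite mul2n addnC (half_bit_double j true). Qed.
Lemma half0 j : ((2 * j)./2 = j)%N.
Proof. by rewrite mul2n doubleK. Qed.
Lemma half2 j : ((2 * j + 2)./2 = j.+1)%N.
Proof. by rewrite -mulnSr half0. Qed.
Lemma odd1 j : odd (2 * j + 1) = true.
Proof. by rewrite oddD oddM. Qed.
Lemma odd0 j : odd (2 * j) = false.
Proof. by rewrite oddM. Qed.
Lemma odd2 j : odd (2 * j + 2) = false.
Proof. by rewrite -mulnSr odd0. Qed.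

Lemma XsetO j : (j < r)%N -> Xset Xp (2 * j + 1) = inx j.
Proof.
move=> jr; rewrite /Xset /= odd1 (_ : (2 * j + 1).-1 = 2 * j)%N; last lia.
rewrite half0 (_ : (1 <= 2 * j + 1)%N = true); last lia.
rewrite (_ : (2 * j + 1 <= 2 * r)%N = true); last lia.
by rewrite /inx /=; case: (inXp Xp (2 * j)); case: (inXp Xp (2 * j + 2)).
Qed.

Lemma XsetE j : (j < r)%N -> Xset Xp (2 * j + 2) = ~~ inx j.+1.
Proof.
move=> jr; rewrite /Xset /= odd2 (_ : (2 * j + 2).-1 = 2 * j + 1)%N; last lia.
rewrite half1 (_ : (1 <= 2 * j + 2)%N = true); last lia.
rewrite (_ : (2 * j + 2 <= 2 * r)%N = true); last lia.
by rewrite /= inxS; case: (inXp Xp (2 * j)); case: (inx j.+1).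
Qed.

Lemma YsetO j : (j < r)%N -> Yset Xp (2 * j + 1) = ~~ inx j.
Proof.
move=> jr; rewrite /Yset XsetO // (_ : (1 <= 2 * j + 1)%N = true); last lia.
by rewrite (_ : (2 * j + 1 <= 2 * r)%N = true); last lia.
Qed.

Lemma YsetE j : (j < r)%N -> Yset Xp (2 * j + 2) = inx j.+1.
Proof.
move=> jr; rewrite /Yset XsetE // (_ : (1 <= 2 * j + 2)%N = true); last lia.
by rewrite negbK (_ : (2 * j + 2 <= 2 * r)%N = true); last lia.
Qed.
Lemma main_iso : rep_iso 2 (2 * r) (MIJ_x t b) (MIJ_y t b)
    (LXY_x t (Xset Xp) (Yset Xp)) (LXY_y t (Xset Xp) (Yset Xp)).
Proof.
have [d hd hu] := @comb_main K r inx cc uu (fun j jr => H1 jr) H2 Hex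
  (fun j _ => uuS j).
have u0 : uu 0 = 0 by rewrite /uu PP0.
pose a := if inx 0 then d else 0.
pose a' := if inx 0 then 0 else d.
have uin : forall j, (j <= r)%N -> inx j -> uu j = a'.
  move=> j jr ij; rewrite hu // u0 add0r /a'.
  by move: ij; case: (inx j); case: (inx 0%N).
have uout : forall j, (j <= r)%N -> ~~ inx j -> uu j = a.
  move=> j jr ij; rewrite hu // u0 add0r /a.
  by move: ij; case: (inx j); case: (inx 0%N).
pose B := cst a. pose B' := cst a'.
have divX : forall j, (j <= r)%N -> ~~ inx j -> t * fdiv (B - PP j) = B - PP j.
  by move=> j jr ij; apply: fdivK; rewrite coefB /= -/(uu j) (uout j jr ij) subrr.
have divY : forall j, (j <= r)%N -> inx j -> t * fdiv (B' - PP j) = B' - PP j.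
  by move=> j jr ij; apply: fdivK; rewrite coefB /= -/(uu j) (uin j jr ij) subrr.
have ha : a' - a != 0.
  by rewrite subr_eq0 /a /a'; case: (inx 0%N); rewrite // eq_sym.
pose k := cst ((a' - a)^-1).
have kdet : k * (B' - B) = 1.
  by rewrite /k /B /B' -cstB cstM mulVf ?cst1.
pose Ge j := if inx j then mx2 t (B - PP j) 1 (fdiv (B' - PP j))
             else mx2 1 (fdiv (B - PP j)) t (B' - PP j).
pose Go j := mx2 1 (B - PP j - b (2 * j + 1)%N) 1 (B' - PP j - b (2 * j + 1)%N).
pose g i := if odd i then Go i./2 else Ge i./2.
exists g, (fun i => inv2 k (g i)); split.
  move=> i /andP [i1 i2].
  have hi2 : (i./2 <= r)%N.
    by have := odd_double_half i; rewrite -mul2n; case: (odd i) => /=; lia.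
  rewrite /g; case: (odd i).
    by apply: inv2P; rewrite -[RHS]kdet; congr (_ * _); ring.
  rewrite /Ge; case ij: (inx i./2); apply: inv2P; rewrite -[RHS]kdet; congr (_ * _).
    by rewrite (divY _ hi2 ij); ring.
  by rewrite [fdiv _ * _]mulrC (divX _ hi2 (negbT ij)); ring.
move=> i /andP [i1 i2].
have [[j [jr ->]]|[j [jr ->]]] : (exists j, (j < r)%N /\ i = (2 * j + 1)%N) \/
    (exists j, (j < r)%N /\ i = (2 * j + 2)%N).
  have := odd_double_half i; rewrite -mul2n; case: (odd i) => /= e; [left|right].
    by exists i./2; split; lia.
  by exists (i./2).-1; split; lia.
  have gi : g (2 * j + 1)%N = Go j by rewrite /g odd1 half1.
  have gp : g (prevv (2 * r) (2 * j + 1)) = Ge j.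
    rewrite /prevv; case: eqP => [e|_].
      have j0 : j = 0%N by lia.
      by rewrite j0 /g odd0 half0 /Ge inx_r PPr PP0.
    by rewrite addn1 /= /g odd0 half0.
  rewrite gi gp /MIJ_x /MIJ_y /LXY_x /LXY_y /LS_x /LS_y odd1 (XsetO jr) (YsetO jr).
  rewrite /Ge /Go /=; case ij: (inx j) => /=.
    exact: odd_in (divY _ (ltnW jr) ij).
  exact: odd_out (divX _ (ltnW jr) (negbT ij)).
have gi : g (2 * j + 2)%N = Ge j.+1 by rewrite /g odd2 half2.
have gp : g (prevv (2 * r) (2 * j + 2)) = Go j.
  rewrite /prevv; case: eqP => [e|_]; first lia.
  by rewrite (_ : (2 * j + 2).-1 = 2 * j + 1)%N ?/g ?odd1 ?half1 //; lia.
have eGo : Go j = mx2 1 (B - PP j.+1 + b (2 * j + 2)%N) 1 (B' - PP j.+1 + b (2 * j + 2)%N).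
  by rewrite /Go PPS; congr mx2; ring.
rewrite gi gp eGo /MIJ_x /MIJ_y /LXY_x /LXY_y /LS_x /LS_y odd2 (XsetE jr) (YsetE jr).
rewrite /Ge /=; case ij: (inx j.+1) => /=.
  exact: even_in (divY _ jr ij).
exact: even_out (divX _ jr (negbT ij)).
Qed.
End Main.

Unset Implicit Arguments.

Theorem theorem3p7 (R : realType) (r : nat) (b : nat -> fps (complex R))
    (Xp : {set 'I_(2 * r)}) :
  (2 <= r)%N ->
  \sum_(1 <= i < (2 * r).+1) b i = 0 ->
  (* X' is a set of peaks {0,2,...,2r-2} with 1 <= |X'| < r *)
  (forall p : 'I_(2 * r), p \in Xp -> ~~ odd p) ->
  (1 <= #|Xp| < r)%N ->
  (forall j : nat, (j < r)%N ->
     (inXp Xp (2 * j) = inXp Xp (2 * j + 2) ->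
        tdvd (b (2 * j + 1)%N + b (2 * j + 2)%N)) /\
     (inXp Xp (2 * j) <> inXp Xp (2 * j + 2) ->
        ~ tdvd (b (2 * j + 1)%N + b (2 * j + 2)%N))) ->
  (forall p q : nat,
     cyc_consecutive
       (fun i => [/\ odd i, (1 <= i <= 2 * r - 1)%N & ~ tdvd (b i + b i.+1)])
       p q ->
     tdvd (b p + b p.+1 + b q + b q.+1)) ->
  rep_iso 2 (2 * r)
    (MIJ_x (fpsX (complex R)) b) (MIJ_y (fpsX (complex R)) b)
    (LXY_x (fpsX (complex R)) (Xset Xp) (Yset Xp))
    (LXY_y (fpsX (complex R)) (Xset Xp) (Yset Xp)).
Proof.
move=> *; apply: main_iso => //.
Qed.
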